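(* For every $\alpha\in(0,\pi/2)$, the competitive ratio of the Straight-Up algorithm is $$\rho(\textsc{Straight-Up};\alpha)=\begin{cases}2\cos\alpha & \text{if } \alpha\le \pi/4,\\ 1/\sin\alpha & \text{otherwise.}\end{cases}$$
   Context: Online drone coverage on a line. A drone has a fixed half angle-of-view $\alpha\in(0,\pi/2)$. A drone at a point $T=(t_x,t_y)$ with $t_y\ge 0$ covers the segment $[t_x-t_y\tan\alpha,\ t_x+t_y\tan\alpha]$ of the $x$-axis. For a point $X=(x,0)$ its feasibility cone is $\mathrm{FC}(X)=\{(u,v): v\ge 0,\ |u-x|\le v\tan\alpha\}$, and the feasibility cone of a finite set of points on the $x$-axis is the intersection of their cones. An input is a sequence of points $X_0=(0,0),X_1,\dots,X_n$ ($n\ge1$) on the $x$-axis, $X_i=(x_i,0)$, revealed one at a time. A solution is a sequence of drone positions $P_0=(0,0),P_1,\dots,P_n$ with $P_i\in \mathrm{FC}(X_0,\dots,X_i)$; its cost is $\sum_{i=0}^{n-1}|P_iP_{i+1}|$ (Euclidean). An online algorithm chooses $P_i$ knowing only $X_0,\dots,X_i$. $\mathrm{OPT}(\mathbf X;\alpha)$ is the minimum cost of a solution when the whole input is known in advance. A request $X_{i+1}$ is redundant if $x_{i+1}\in[\min_{j\le i}x_j,\max_{j\le i}x_j]$. An input is good if it has no redundant requests and is scaled (and possibly reflected) so that $\min_j x_j=-1$ and $r:=\max_j x_j\in[0,1]$. The competitive ratio $\rho(\mathrm{ALG};\alpha)$ is the supremum over good inputs of $\mathrm{ALG}(\mathbf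 X;\alpha)/\mathrm{OPT}(\mathbf X;\alpha)$. The Straight-Up algorithm keeps the drone on the $y$-axis: $P_i$ is the lowest point of the $y$-axis lying in $\mathrm{FC}(X_0,\dots,X_i)$. *)

(* Defs.v *)
From HB Require Import structures.
From mathcomp Require Import all_boot all_order all_algebra.
From mathcomp Require Import all_classical all_reals.
From mathcomp Require Import ereal topology normedtype sequences exp trigo.
Set Implicit Arguments. Unset Strict Implicit. Unset Printing Implicit Defensive.
Import Order.TTheory GRing.Theory Num.Theory.
Local Open Scope ring_scope.
Local Open Scope classical_set_scope.

Section Drone.
Variable R : realType.

(* An input of length n is encoded by x : nat -> R, with X_i = (x i, 0)
   for i <= n (values beyond n are irrelevant), and x 0 = 0. *)

Definition in_FC1 (tana : R) (x0 : R) (p : R * R) : Prop :=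
  0 <= p.2 /\ `|p.1 - x0| <= p.2 * tana.

Definition in_FC (alpha : R) (x : nat -> R) (i : nat) (p : R * R) : Prop :=
  forall j, (j <= i)%N -> in_FC1 (tan alpha) (x j) p.

Definition dist2 (p q : R * R) : R :=
  Num.sqrt ((p.1 - q.1) ^+ 2 + (p.2 - q.2) ^+ 2).

Definition cost (n : nat) (P : nat -> R * R) : R :=
  \sum_(i < n) dist2 (P i) (P i.+1).

Definition is_solution (alpha : R) (n : nat) (x : nat -> R)
    (P : nat -> R * R) : Prop :=
  P 0%N = (0, 0) /\ forall i, (i <= n)%N -> in_FC alpha x i (P i).

Definition OPT (alpha : R) (n : nat) (x : nat -> R) : R :=
  inf [set c | exists P, is_solution alpha n x P /\ c = cost n P].

Definition straight_up (alpha : R) (x : nat -> R) (i : nat) : R * R :=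
  (0, inf [set v | in_FC alpha x i (0, v)]).

Definition ALG_SU (alpha : R) (n : nat) (x : nat -> R) : R :=
  cost n (straight_up alpha x).

Definition pmin (x : nat -> R) (i : nat) : R :=
  \big[Num.min/x 0%N]_(j < i.+1) x j.
Definition pmax (x : nat -> R) (i : nat) : R :=
  \big[Num.max/x 0%N]_(j < i.+1) x j.

Definition redundant (x : nat -> R) (i : nat) : Prop :=
  pmin x i <= x i.+1 <= pmax x i.

Definition good_input (n : nat) (x : nat -> R) : Prop :=
  (1 <= n)%N /\ x 0%N = 0 /\
  (forall i, (i < n)%N -> ~ redundant x i) /\
  pmin x n = -1 /\ 0 <= pmax x n <= 1.

Definition rho_SU (alpha : R) : \bar R :=
  ereal_sup [set (ALG_SU alpha nx.1 nx.2 / OPT alpha nx.1 nx.2)%:E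
            | nx in [set nx : nat * (nat -> R) | good_input nx.1 nx.2]].

End Drone.

(* Main.v *)
Require Import Defs.
From HB Require Import structures.
From mathcomp Require Import all_boot all_order all_algebra.
From mathcomp Require Import all_classical all_reals.
From mathcomp Require Import ereal topology normedtype sequences exp trigo.
From mathcomp Require Import ring lra.
Import Order.TTheory GRing.Theory Num.Theory.
Local Open Scope ring_scope.
Local Open Scope classical_set_scope.

Section Proofs.
Context {R : realType}.

Lemma pmin_le (x : nat -> R) i j : (j <= i)%N -> pmin x i <= x j.
Proof.
move=> hj; have := @bigmin_le _ _ 'I_i.+1 (x 0%N) (Ordinal (hj : (j < i.+1)%N)) (fun j => x j).
by [].
Qed.

Lemma pmax_ge (x : nat -> R) i j : (j <= i)%N -> x j <= pmax x i.
Proof.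
move=> hj; have := @le_bigmax _ _ 'I_i.+1 (x 0%N) (fun j => x j) (Ordinal (hj : (j < i.+1)%N)).
by [].
Qed.

Lemma pmin_attained (x : nat -> R) i : exists2 j, (j <= i)%N & x j = pmin x i.
Proof.
case: (@arg_minP _ _ 'I_i.+1 ord0 xpredT (fun j => x j) erefl) => j _ Hj.
have hj : (j <= i)%N by rewrite -ltnS ltn_ord.
exists (nat_of_ord j) => //.
apply: le_anti; apply/andP; split; last exact: pmin_le.
apply/bigmin_geP; split; first exact: (Hj ord0).
by move=> k _; apply: Hj.
Qed.

Lemma good_bounds {n} {x : nat -> R} : good_input n x ->
  (forall j, (j <= n)%N -> `|x j| <= 1) /\ exists2 j, (j <= n)%N & x j = -1.
Proof.
move=> [_ [_ [_ [Hmin /andP [_ Hmax]]]]].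
have [k Hk Ek] := pmin_attained x n.
split; last by exists k => //; rewrite Ek.
move=> j hj; have := pmin_le x n j hj; have := pmax_ge x n j hj; rewrite Hmin ler_norml.
move=> h1 h2; apply/andP; split => //; exact: le_trans h1 Hmax.
Qed.


Lemma trig_pos {a : R} : 0 < a -> a < pi / 2 ->
  0 < sin a /\ 0 < cos a /\ tan a = sin a / cos a /\ cos a ^+ 2 + sin a ^+ 2 = 1.
Proof.
move=> a0 a1; have hp := pi_gt0 R.
split; first by apply: sin_gt0_pihalf; rewrite a0 a1.
split; first by apply: cos_gt0_pihalf; rewrite a1 andbT; lra.
by split => //; exact: cos2Dsin2.
Qed.

Lemma quarter {a : R} : 0 < a -> a < pi / 2 -> (a <= pi / 4) = (sin a <= cos a).
Proof.
move=> a0 a1; have hp := pi_gt0 R.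
have [s0 [c0 _]] := trig_pos a0 a1.
have c2 : cos (a + a) = cos a ^+ 2 - sin a ^+ 2 by rewrite cosD !expr2.
have [h|h] := leP a (pi / 4).
  have : 0 <= cos (a + a) by apply: cos_ge0_pihalf; apply/andP; split; lra.
  rewrite c2 => H; apply/esym; apply/negbNE/negP; rewrite -ltNge => hcs.
  nra.
have : cos (a + a) < 0.
  have -> : a + a = (a + a - pi / 2) + pi / 2 by rewrite subrK.
  rewrite cosDpihalf oppr_lt0; apply: sin_gt0_pihalf; apply/andP; split; lra.
rewrite c2 => H; apply/esym/negbTE; rewrite -ltNge; nra.
Qed.

Lemma dist_ge (p q : R * R) e1 e2 : e1 ^+ 2 + e2 ^+ 2 = 1 ->
  e1 * (q.1 - p.1) + e2 * (q.2 - p.2) <= dist2 p q.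
Proof.
move=> He; rewrite /dist2.
set L := e1 * (q.1 - p.1) + e2 * (q.2 - p.2).
have [h|h] := leP L 0; first exact: le_trans h (sqrtr_ge0 _).
rewrite -(ger0_norm (ltW h)) -sqrtr_sqr ler_sqrt; last by rewrite addr_ge0 // sqr_ge0.
have -> : (p.1 - q.1) ^+ 2 + (p.2 - q.2) ^+ 2 =
  ((q.1 - p.1) ^+ 2 + (q.2 - p.2) ^+ 2) * (e1 ^+ 2 + e2 ^+ 2) by rewrite He mulr1; ring.
rewrite -subr_ge0.
have -> : ((q.1 - p.1) ^+ 2 + (q.2 - p.2) ^+ 2) * (e1 ^+ 2 + e2 ^+ 2) - L ^+ 2
  = (e1 * (q.2 - p.2) - e2 * (q.1 - p.1)) ^+ 2 by rewrite /L; ring.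
exact: sqr_ge0.
Qed.

Lemma cost_ge (P : nat -> R * R) n e1 e2 : e1 ^+ 2 + e2 ^+ 2 = 1 ->
  e1 * (P n).1 + e2 * (P n).2 - (e1 * (P 0%N).1 + e2 * (P 0%N).2) <= cost n P.
Proof.
move=> He; rewrite /cost.
rewrite -(@telescope_sumr _ 0 n (fun i => e1 * (P i).1 + e2 * (P i).2)) // big_mkord.
apply: ler_sum => i _.
have -> : e1 * (P i.+1).1 + e2 * (P i.+1).2 - (e1 * (P i).1 + e2 * (P i).2)
  = e1 * ((P i.+1).1 - (P i).1) + e2 * ((P i.+1).2 - (P i).2) by ring.
exact: dist_ge.
Qed.


Lemma in_FC0 (a : R) (x : nat -> R) i v : in_FC a x i (0, v) <->
  (0 <= v /\ forall j, (j <= i)%N -> `|x j| <= v * tan a).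
Proof.
rewrite /in_FC /in_FC1 /=; split.
  move=> H; split; first by case: (H 0%N (leq0n _)).
  by move=> j hj; case: (H j hj); rewrite sub0r normrN.
by move=> [h0 H] j hj; split => //; rewrite sub0r normrN; apply: H.
Qed.

Lemma ALG_good (a : R) n (x : nat -> R) : 0 < a -> a < pi / 2 -> good_input n x ->
  ALG_SU a n x = (tan a)^-1.
Proof.
move=> a0 a1 G; have [Hb [k Hk Ek]] := good_bounds G.
have x0 : x 0%N = 0 by case: G => _ [].
have [s0 [c0 [tE _]]] := trig_pos a0 a1.
have t0 : 0 < tan a by rewrite tE divr_gt0.
pose S i := [set v : R | in_FC a x i (0, v)].
pose v i := inf (S i).
have lb i : lbound (S i) 0 by move=> y /in_FC0 [].
have hlb i : has_lbound (S i) by exists 0; apply: lb.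
have mem i : (i <= n)%N -> S i (tan a)^-1.
  move=> hi; apply/in_FC0; split; first by rewrite invr_ge0 ltW.
  by move=> j hj; rewrite mulVf ?gt_eqF //; apply: Hb; apply: leq_trans hi.
have v0 : v 0%N = 0.
  apply: le_anti; apply/andP; split.
    apply: (ge_inf (hlb 0%N)); apply/in_FC0; split => // j; rewrite leqn0 => /eqP ->.
    by rewrite x0 normr0 mul0r.
  by apply: lb_le_inf; [exists 0; apply/in_FC0; split => // j; rewrite leqn0 => /eqP ->;
    rewrite x0 normr0 mul0r | apply: lb].
have vn : v n = (tan a)^-1.
  apply: le_anti; apply/andP; split; first exact: (ge_inf (hlb n)) (mem n (leqnn n)).
  apply: lb_le_inf; first by exists (tan a)^-1; apply: mem.
  move=> y /in_FC0 [_ H]; have := H k Hk; rewrite Ek normrN normr1 => h.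
  by rewrite -(ler_pM2r t0) mulVf ?gt_eqF.
have mono i : (i < n)%N -> v i <= v i.+1.
  move=> hi; apply: lb_le_inf; first by exists (tan a)^-1; apply: mem.
  move=> y /in_FC0 [y0 H]; apply: (ge_inf (hlb i)); apply/in_FC0; split => //.
  by move=> j hj; apply: H; apply: leqW.
rewrite /ALG_SU /cost.
transitivity (\sum_(i < n) (v i.+1 - v i)).
  apply: eq_bigr => i _; rewrite /dist2 /straight_up /=.
  rewrite subrr expr0n /= add0r sqrtr_sqr distrC ger0_norm //.
  by rewrite subr_ge0; apply: mono.
by rewrite -(big_mkord xpredT (fun i => v i.+1 - v i)) telescope_sumr // vn v0 subr0.
Qed.


Definition Dv (a : R) : R := if a <= pi / 4 then (2 * sin a)^-1 else cos a.

Lemma Dv_gt0 (a : R) : 0 < a -> a < pi / 2 -> 0 < Dv a.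
Proof.
move=> a0 a1; have [s0 [c0 _]] := trig_pos a0 a1.
by rewrite /Dv; case: ifP => _ //; rewrite invr_gt0 mulr_gt0.
Qed.

Lemma cone_lb (a u v : R) : 0 < a -> a < pi / 2 ->
  in_FC1 (tan a) 0 (u, v) -> in_FC1 (tan a) (-1) (u, v) ->
  exists e1 e2, e1 ^+ 2 + e2 ^+ 2 = 1 /\ Dv a <= e1 * u + e2 * v.
Proof.
move=> a0 a1 [/= v0 A] [_ B].
have [s0 [c0 [tE cs]]] := trig_pos a0 a1.
set s := sin a in s0 tE cs *; set c := cos a in c0 tE cs *.
set w := v * tan a in A B.
have ws : w * c = v * s by rewrite /w tE; field; rewrite gt_eqF.
rewrite /= subr0 ler_norml in A; rewrite /= opprK ler_norml in B.
case/andP: A => A1 A2; case/andP: B => B1 B2.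
rewrite /Dv (quarter a0 a1) -/s -/c; case: ifP => hq.
  exists (- s), c; split; first by rewrite sqrrN addrC.
  have h2s : 0 < 2 * s by rewrite mulr_gt0.
  rewrite -(ler_pM2l h2s) mulfV ?gt_eqF //.
  have H1 : 0 <= (c ^+ 2 - s ^+ 2) * (w + u).
    have -> : c ^+ 2 - s ^+ 2 = (c - s) * (c + s) by ring.
    by apply: mulr_ge0; [apply: mulr_ge0|]; lra.
  have H2 : 0 <= (c ^+ 2 + s ^+ 2) * (w - u - 1).
    by apply: mulr_ge0; [rewrite cs | lra].
  have E : 2 * s * (- s * u + c * v) - 1 =
     (c ^+ 2 + s ^+ 2) * (w - u - 1) + (c ^+ 2 - s ^+ 2) * (w + u).
    have -> : 2 * s * (- s * u + c * v) - 1 =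
     (c ^+ 2 + s ^+ 2) * (w - u - 1) + (c ^+ 2 - s ^+ 2) * (w + u)
     + 2 * c * (v * s - w * c) + (c ^+ 2 + s ^+ 2 - 1) by ring.
    by rewrite ws cs !subrr mulr0 !addr0.
  by rewrite -subr_ge0 E addr_ge0.
exists (- c), s; split; first by rewrite sqrrN.
have H : 0 <= c * (w - u - 1) by apply: mulr_ge0; lra.
have E : - c * u + s * v - c = c * (w - u - 1).
  have -> : s * v = v * s by ring.
  by rewrite -ws; ring.
by rewrite -subr_ge0 E.
Qed.

Lemma OPT_lb (a : R) n (x : nat -> R) : 0 < a -> a < pi / 2 -> good_input n x ->
  Dv a <= OPT a n x.
Proof.
move=> a0 a1 G; have [Hb [k Hk Ek]] := good_bounds G.
have x0 : x 0%N = 0 by case: G => _ [].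
have [s0 [c0 [tE _]]] := trig_pos a0 a1.
have t0 : 0 < tan a by rewrite tE divr_gt0.
rewrite /OPT; apply: lb_le_inf.
  pose P0 := fun i : nat => if i == 0%N then ((0 : R), (0 : R)) else (0, (tan a)^-1).
  exists (cost n P0), P0; split => //; split => // i hi.
  rewrite /P0; case: eqP => [->|_].
    move=> j; rewrite leqn0 => /eqP ->; rewrite /in_FC1 /= x0 subrr normr0 mul0r.
    by split.
  apply/in_FC0; split; first by rewrite invr_ge0 ltW.
  by move=> j hj; rewrite mulVf ?gt_eqF //; apply: Hb; apply: leq_trans hi.
move=> _ [P [[HP0 HPn] ->]].
have Hn := HPn n (leqnn n).
have A := Hn 0%N (leq0n n); have B := Hn k Hk.
rewrite x0 in A; rewrite Ek in B.
move: A B; case E: (P n) => [u v] A B.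
have [e1 [e2 [He H]]] := @cone_lb a u v a0 a1 A B.
apply: (le_trans H); apply: le_trans _ (@cost_ge P n e1 e2 He).
by rewrite HP0 E /= !mulr0 addr0 subr0.
Qed.


Lemma pmax_attained (x : nat -> R) i : exists2 j, (j <= i)%N & x j = pmax x i.
Proof.
case: (@arg_maxP _ _ 'I_i.+1 ord0 xpredT (fun j => x j) erefl) => j _ Hj.
have hj : (j <= i)%N by rewrite -ltnS ltn_ord.
exists (nat_of_ord j) => //.
apply: le_anti; apply/andP; split; first exact: pmax_ge.
apply/bigmax_leP; split; first exact: (Hj ord0).
by move=> k _; apply: Hj.
Qed.

Definition x1 : nat -> R := fun i => if i == 1%N then -1 else 0.

Lemma x1_vals j : x1 j = 0 \/ x1 j = -1.
Proof. by rewrite /x1; case: eqP => _; [right|left]. Qed.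

Lemma x1_good : good_input 1 x1.
Proof.
split => //; split => //; split.
  move=> i; rewrite ltnS leqn0 => /eqP -> /andP [h _].
  have [j hj Ej] := pmin_attained x1 0.
  move: hj; rewrite leqn0 => /eqP jz; rewrite -Ej jz /x1 /= in h; lra.
split.
  apply: le_anti; apply/andP; split; first exact: (pmin_le x1 1 1).
  have [j _ <-] := pmin_attained x1 1.
  by case: (x1_vals j) => ->; lra.
apply/andP; split; first exact: (pmax_ge x1 1 0).
have [j _ <-] := pmax_attained x1 1.
by case: (x1_vals j) => ->; lra.
Qed.

Lemma OPT_x1 (a : R) : 0 < a -> a < pi / 2 -> OPT a 1 x1 <= Dv a.
Proof.
move=> a0 a1; have [s0 [c0 [tE cs]]] := trig_pos a0 a1.
rewrite /OPT; apply: ge_inf.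
  exists 0 => _ [P [_ ->]]; rewrite /cost; apply: sumr_ge0 => i _; exact: sqrtr_ge0.
have FC0 : forall q : R * R, in_FC1 (tan a) 0 q -> in_FC1 (tan a) (-1) q ->
    exists P, is_solution a 1 x1 P /\ dist2 (0, 0) q = cost 1 P.
  move=> q A B; exists (fun i => if i == 0%N then (0, 0) else q); split.
    split => // i; rewrite leq_eqVlt ltnS leqn0 => /orP [/eqP ->|/eqP ->] j.
      by move=> _; case: (x1_vals j) => ->.
    rewrite leqn0 => /eqP ->; rewrite /in_FC1 /= subrr normr0 mul0r; split => //.
  by rewrite /cost big_ord1.
set s := sin a in s0 tE cs *; set c := cos a in c0 tE cs *.
rewrite /Dv; case: ifP => hq.
  have hsc : s <= c by rewrite /s /c -(quarter a0 a1).
  have K : c / (2 * s) * tan a = 2^-1 by rewrite tE; field; rewrite ?gt_eqF.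
  have [P [HP HE]] : exists P, is_solution a 1 x1 P /\
       dist2 (0, 0) (- 2^-1, c / (2 * s)) = cost 1 P.
    apply: FC0; (split; [by rewrite /= divr_ge0 // ?mulr_ge0 // ltW|]);
      rewrite /= K ler_norml; lra.
  have E : (0 - - 2^-1) ^+ 2 + (0 - c / (2 * s)) ^+ 2 = ((2 * s)^-1) ^+ 2.
    apply/eqP; rewrite -subr_eq0.
    have -> : (0 - - 2^-1) ^+ 2 + (0 - c / (2 * s)) ^+ 2 - ((2 * s)^-1) ^+ 2
       = (c ^+ 2 + s ^+ 2 - 1) / (4 * s ^+ 2) by field; rewrite gt_eqF.
    by rewrite cs subrr mul0r.
  exists P; split => //; rewrite -HE.
  by rewrite /dist2 /= E sqrtr_sqr ger0_norm // invr_ge0 mulr_ge0 // ltW.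
have hsc : c < s by rewrite ltNge /s /c -(quarter a0 a1) hq.
have K : s * c * tan a = s ^+ 2 by rewrite tE; field; rewrite gt_eqF.
have [P [HP HE]] : exists P, is_solution a 1 x1 P /\
     dist2 (0, 0) (- c ^+ 2, s * c) = cost 1 P.
  have hcs : c ^+ 2 <= s ^+ 2.
    rewrite -subr_ge0; have -> : s ^+ 2 - c ^+ 2 = (s - c) * (s + c) by ring.
    by apply: mulr_ge0; lra.
  apply: FC0; (split; [by rewrite /= mulr_ge0 // ltW|]); rewrite /= K ler_norml.
    by rewrite subr0; have := sqr_ge0 c; have := sqr_ge0 s; move=> h1 h2; apply/andP; split; lra.
  have -> : - c ^+ 2 - -1 = s ^+ 2 by rewrite -cs; ring.
  by rewrite lexx andbT; have := sqr_ge0 s; move=> h1; lra.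
have E : (0 - - c ^+ 2) ^+ 2 + (0 - s * c) ^+ 2 = c ^+ 2.
  have -> : (0 - - c ^+ 2) ^+ 2 + (0 - s * c) ^+ 2 = c ^+ 2 * (c ^+ 2 + s ^+ 2) by ring.
  by rewrite cs mulr1.
exists P; split => //; rewrite -HE.
by rewrite /dist2 /= E sqrtr_sqr ger0_norm // ltW.
Qed.

End Proofs.

Theorem theorem1 (R : realType) (alpha : R) :
  0 < alpha -> alpha < pi / 2 ->
  rho_SU alpha =
    (if alpha <= pi / 4 then 2 * cos alpha else (sin alpha)^-1)%:E.
Proof.
move=> a0 a1.
have [s0 [c0 [tE cs]]] := trig_pos a0 a1.
have t0 : 0 < tan alpha by rewrite tE divr_gt0.
have D0 := @Dv_gt0 R alpha a0 a1.
have key : rho_SU alpha = ((tan alpha)^-1 / Dv alpha)%:E.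
  apply: le_anti; apply/andP; split.
    apply: ge_ereal_sup => _ [[n x] /= G <-].
    rewrite lee_fin ALG_good //.
    have Ho := @OPT_lb R alpha n x a0 a1 G.
    apply: ler_wpM2l; first by rewrite invr_ge0 ltW.
    by rewrite lef_pV2 ?posrE // (lt_le_trans D0 Ho).
  apply: ereal_sup_ubound; exists (1%N, x1) => /=; first exact: x1_good.
  rewrite ALG_good //; last exact: x1_good.
  have -> // : OPT alpha 1 x1 = Dv alpha.
  by apply: le_anti; rewrite (@OPT_x1 R alpha a0 a1) (@OPT_lb R alpha 1 x1 a0 a1 x1_good).
rewrite key /Dv; case: ifP => _; congr (_%:E); rewrite tE; field.
  by rewrite !gt_eqF.
by rewrite !gt_eqF.
Qed.
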